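(* Let $S$ be an inverse semigroup. Then every inverse subsemigroup of $S\times S$ containing the diagonal $\{(s,s)\colon s\in S\}$ is a congruence on $S$ if and only if $S$ is a group.
   Context: An inverse semigroup is a semigroup in which every element $s$ has a unique inverse $s^{-1}$, i.e. unique $t$ with $sts=s$, $tst=t$; an inverse subsemigroup is a subsemigroup closed under taking inverses ($S\times S$ is inverse with componentwise inverses). A congruence on $S$ is an equivalence relation on $S$ which is a subsemigroup of $S\times S$. *)

(* Defs.v *)
Section InvSemigroup.
Variables (S : Type) (mul : S -> S -> S).

Definition associative_op : Prop :=
  forall x y z, mul x (mul y z) = mul (mul x y) z.

Definition is_inv (s t : S) : Prop :=
  mul (mul s t) s = s /\ mul (mul t s) t = t.

Definition inverse_semigroup : Prop :=
  associative_op /\ forall s, exists! t, is_inv s t.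

Definition subsemigroup_prod (R : S -> S -> Prop) : Prop :=
  forall a b c d, R a b -> R c d -> R (mul a c) (mul b d).

Definition inverse_subsemigroup_prod (R : S -> S -> Prop) : Prop :=
  subsemigroup_prod R /\
  forall a b a' b', R a b -> is_inv a a' -> is_inv b b' -> R a' b'.

Definition contains_diagonal (R : S -> S -> Prop) : Prop := forall s, R s s.

Definition equivalence_rel (R : S -> S -> Prop) : Prop :=
  (forall x, R x x) /\ (forall x y, R x y -> R y x) /\
  (forall x y z, R x y -> R y z -> R x z).

Definition congruence (R : S -> S -> Prop) : Prop :=
  equivalence_rel R /\ subsemigroup_prod R.

Definition is_group : Prop :=
  exists e, (forall x, mul e x = x /\ mul x e = x) /\
            (forall x, exists y, mul x y = e /\ mul y x = e).

End InvSemigroup.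

Arguments associative_op {S} mul.
Arguments is_inv {S} mul s t.
Arguments inverse_semigroup {S} mul.
Arguments subsemigroup_prod {S} mul R.
Arguments inverse_subsemigroup_prod {S} mul R.
Arguments contains_diagonal {S} R.
Arguments equivalence_rel {S} R.
Arguments congruence {S} mul R.
Arguments is_group {S} mul.

(* Main.v *)
Require Import Defs.
From Stdlib Require Import ClassicalEpsilon.

Definition invf {S : Type} (mul : S -> S -> S) (U : forall s, exists! t, is_inv mul s t) (s : S) : S :=
  proj1_sig (constructive_indefinite_description _ (U s)).

Lemma invf_spec {S} (mul : S -> S -> S) (U : forall s, exists! t, is_inv mul s t) s : is_inv mul s (invf mul U s).
Proof. unfold invf. exact (proj1 (proj2_sig (constructive_indefinite_description _ (U s)))). Qed.

Lemma invf_uniq {S} (mul : S -> S -> S) (U : forall s, exists! t, is_inv mul s t) s t : is_inv mul s t -> t = invf mul U s.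
Proof. unfold invf. intro H.
  exact (eq_sym (proj2 (proj2_sig (constructive_indefinite_description _ (U s))) t H)). Qed.

Lemma is_inv_sym {S} (mul : S -> S -> S) s t : is_inv mul s t -> is_inv mul t s.
Proof. intros [H1 H2]; split; assumption. Qed.

Definition idem {S} (mul : S -> S -> S) e := mul e e = e.

Lemma idem_inv_self {S} (mul : S -> S -> S) e : idem mul e -> is_inv mul e e.
Proof. unfold idem; intro H; split; rewrite !H; reflexivity. Qed.

Lemma idem_mul {S} (mul : S -> S -> S) (A : associative_op mul) (U : forall s, exists! t, is_inv mul s t) e f :
  idem mul e -> idem mul f -> idem mul (mul e f).
Proof.
  intros He Hf. unfold idem in *.
  set (x := invf mul U (mul e f)).
  destruct (invf_spec mul U (mul e f)) as [H1 H2]. fold x in H1, H2.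
  assert (Hx : mul f (mul x e) = x).
  { apply invf_uniq. split.
    - rewrite !A in *. rewrite <- (A e f f), Hf. rewrite <- (A _ e e). rewrite He. exact H1.
    - rewrite !A in *. rewrite <- (A _ e e), He, <- (A _ f f), Hf.
      transitivity (mul (mul f (mul (mul (mul x e) f) x)) e); [rewrite !A; reflexivity|]. rewrite H2. reflexivity. }
  assert (Hxi : idem mul x).
  { unfold idem. transitivity (mul (mul f (mul x e)) (mul f (mul x e))); [rewrite Hx; reflexivity|].
    replace (mul (mul f (mul x e)) (mul f (mul x e))) with (mul (mul f (mul (mul x (mul e f)) x)) e)
      by (rewrite !A; reflexivity).
    rewrite H2, <- A. exact Hx. }
  assert (E : mul e f = x).
  { assert (Hi2 : is_inv mul x (mul e f)) by (apply is_inv_sym; split; assumption).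
    rewrite (invf_uniq mul U _ _ Hi2), <- (invf_uniq mul U _ _ (idem_inv_self mul x Hxi)). reflexivity. }
  rewrite E. exact Hxi.
Qed.

Lemma idem_comm {S} (mul : S -> S -> S) (A : associative_op mul) (U : forall s, exists! t, is_inv mul s t) e f :
  idem mul e -> idem mul f -> mul e f = mul f e.
Proof.
  intros He Hf.
  pose proof (idem_mul mul A U e f He Hf) as Hef.
  pose proof (idem_mul mul A U f e Hf He) as Hfe.
  unfold idem in *.
  assert (Hi : is_inv mul (mul e f) (mul f e)).
  { split.
    - replace (mul (mul (mul e f) (mul f e)) (mul e f)) with (mul (mul e (mul f f)) (mul (mul e e) f))
        by (rewrite !A; reflexivity).
      rewrite He, Hf. exact Hef.
    - replace (mul (mul (mul f e) (mul e f)) (mul f e)) with (mul (mul f (mul e e)) (mul (mul f f) e))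
        by (rewrite !A; reflexivity).
      rewrite He, Hf. exact Hfe. }
  rewrite (invf_uniq mul U _ _ Hi). apply (invf_uniq mul U (mul e f) (mul e f)). apply idem_inv_self. exact Hef.
Qed.

Definition Rle {S} (mul : S -> S -> S) (a b : S) : Prop := exists e, idem mul e /\ a = mul e b.

Lemma idem_xxi {S} (mul : S -> S -> S) (A : associative_op mul) x y :
  is_inv mul x y -> idem mul (mul x y).
Proof. intros [H1 H2]. unfold idem. rewrite A, H1. reflexivity. Qed.

Lemma main_fwd {S} (mul : S -> S -> S) (HS : inverse_semigroup mul) (s0 : S) :
  (forall R : S -> S -> Prop,
     inverse_subsemigroup_prod mul R -> contains_diagonal R -> congruence mul R) -> is_group mul.
Proof.
  destruct HS as [A U]. intros H.
  set (i := invf mul U).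
  assert (Hi : forall x, is_inv mul x (i x)) by (intro; apply invf_spec).
  assert (Hii : forall x, is_inv mul (i x) x) by (intro; apply is_inv_sym; apply Hi).
  assert (Hcong : congruence mul (Rle mul)).
  { apply H.
    - split.
      + intros a b c d [e [He Ha]] [f [Hf Hc]]. subst a c.
        assert (Hb : idem mul (mul b (mul f (i b)))).
        { unfold idem in *. destruct (Hi b) as [B1 B2].
          replace (mul (mul b (mul f (i b))) (mul b (mul f (i b))))
            with (mul b (mul (mul f (mul (i b) b)) (mul f (i b)))) by (rewrite !A; reflexivity).
          rewrite (idem_comm mul A U f (mul (i b) b) Hf (idem_xxi mul A _ _ (Hii b))).
          replace (mul b (mul (mul (mul (i b) b) f) (mul f (i b))))
            with (mul (mul (mul b (i b)) b) (mul (mul f f) (i b))) by (rewrite !A; reflexivity).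
          rewrite B1, Hf, !A. reflexivity. }
        exists (mul e (mul b (mul f (i b)))). split.
        * apply (idem_mul mul A U); assumption.
        * replace (mul (mul e (mul b (mul f (i b)))) (mul b d))
            with (mul (mul e b) (mul (mul f (mul (i b) b)) d)) by (rewrite !A; reflexivity).
          rewrite (idem_comm mul A U f (mul (i b) b) Hf (idem_xxi mul A _ _ (Hii b))).
          replace (mul (mul e b) (mul (mul (mul (i b) b) f) d))
            with (mul (mul (mul (mul e b) (i b)) b) (mul f d)) by (rewrite !A; reflexivity).
          rewrite <- (A e b (i b)), <- (A e (mul b (i b)) b), (proj1 (Hi b)). reflexivity.
      + intros a b a' b' [e [He Ha]] Ha' Hb'. subst a.
        rewrite (invf_uniq mul U _ _ Ha'), (invf_uniq mul U _ _ Hb'). fold i.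
        destruct (Hi b) as [B1 B2].
        pose proof (idem_comm mul A U e (mul b (i b)) He (idem_xxi mul A _ _ (Hi b))) as C.
        unfold idem in He.
        assert (E : i (mul e b) = mul (i b) e).
        { symmetry. apply invf_uniq. split.
          - replace (mul (mul (mul e b) (mul (i b) e)) (mul e b))
              with (mul (mul e (mul b (i b))) (mul (mul e e) b)) by (rewrite !A; reflexivity).
            rewrite He, C. replace (mul (mul (mul b (i b)) e) (mul e b)) with (mul (mul b (i b)) (mul (mul e e) b))
              by (rewrite !A; reflexivity). rewrite He, A, <- C, <- A, B1. reflexivity.
          - replace (mul (mul (mul (i b) e) (mul e b)) (mul (i b) e))
              with (mul (i b) (mul (mul e e) (mul (mul b (i b)) e))) by (rewrite !A; reflexivity).
            rewrite He, <- C, (A e e), He, C, (A (i b) (mul b (i b)) e), (A (i b) b (i b)), B2. reflexivity. }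
        rewrite E. exists (mul (i b) (mul e b)). split.
        * unfold idem.
          replace (mul (mul (i b) (mul e b)) (mul (i b) (mul e b)))
            with (mul (i b) (mul (mul e (mul b (i b))) (mul e b))) by (rewrite !A; reflexivity).
          rewrite C. replace (mul (i b) (mul (mul (mul b (i b)) e) (mul e b)))
            with (mul (mul (mul (i b) b) (i b)) (mul (mul e e) b)) by (rewrite !A; reflexivity).
          rewrite B2, He. reflexivity.
        * replace (mul (mul (i b) (mul e b)) (i b)) with (mul (i b) (mul e (mul b (i b))))
            by (rewrite !A; reflexivity).
          rewrite C, !A, B2. reflexivity.
    - intro a. exists (mul a (i a)). split. apply idem_xxi; auto. destruct (Hi a) as [H1 _]. auto. }
  destruct Hcong as [[_ [Hsym _]] _].
  assert (Key : forall e f, idem mul e -> idem mul f -> mul e f = f).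
  { intros e f He Hf.
    assert (R1 : Rle mul (mul e f) f) by (exists e; split; auto).
    destruct (Hsym _ _ R1) as [g [Hg Hfg]].
    transitivity (mul e (mul g (mul e f))); [rewrite <- Hfg; reflexivity|].
    replace (mul e (mul g (mul e f))) with (mul (mul e g) (mul e f)) by (rewrite !A; reflexivity).
    rewrite (idem_comm mul A U e g He Hg).
    replace (mul (mul g e) (mul e f)) with (mul g (mul (mul e e) f)) by (rewrite !A; reflexivity).
    unfold idem in He. rewrite He. symmetry. exact Hfg. }
  assert (Uni : forall e f, idem mul e -> idem mul f -> e = f).
  { intros e f He Hf. rewrite <- (Key f e Hf He), (idem_comm mul A U f e Hf He). apply Key; auto. }
  set (E := mul s0 (i s0)).
  assert (HE : idem mul E) by (apply idem_xxi; auto).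
  assert (L : forall x, mul x (i x) = E) by (intro x; apply Uni; auto; apply idem_xxi; auto).
  assert (L2 : forall x, mul (i x) x = E) by (intro x; apply Uni; auto; apply idem_xxi; auto).
  exists E. split.
  - intro x. split.
    + rewrite <- (L x). exact (proj1 (Hi x)).
    + rewrite <- (L2 x), A. exact (proj1 (Hi x)).
  - intro x. exists (i x). auto.
Qed.

Lemma main_bwd {S} (mul : S -> S -> S) (A : associative_op mul) :
  is_group mul -> forall R : S -> S -> Prop,
     inverse_subsemigroup_prod mul R -> contains_diagonal R -> congruence mul R.
Proof.
  intros [e [He Hinv]] R [Hsub Hcl] Hd.
  assert (Inv : forall x y, mul x y = e -> mul y x = e -> is_inv mul x y).
  { intros x y H1 H2. split.
    - rewrite H1. apply He.
    - rewrite H2. apply He. }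
  assert (Sym : forall x y, R x y -> R y x).
  { intros x y Hxy.
    destruct (Hinv x) as [x' [X1 X2]]. destruct (Hinv y) as [y' [Y1 Y2]].
    pose proof (Hcl _ _ _ _ Hxy (Inv _ _ X1 X2) (Inv _ _ Y1 Y2)) as H'.
    pose proof (Hsub _ _ _ _ (Hsub _ _ _ _ (Hd y) H') (Hd x)) as H''.
    rewrite <- (A y x' x), X2, Y1 in H''. rewrite (proj2 (He y)), (proj1 (He x)) in H''. exact H''. }
  split; [split; [exact Hd | split; [exact Sym |]] | exact Hsub].
  intros x y z Hxy Hyz.
  destruct (Hinv y) as [y' [Y1 Y2]].
  assert (Hy' : R y' y').
  { apply Hd. }
  pose proof (Hsub _ _ _ _ (Hsub _ _ _ _ Hxy Hy') Hyz) as H''.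
  rewrite <- (A x y' y), Y2, Y1 in H''. rewrite (proj2 (He x)), (proj1 (He z)) in H''. exact H''.
Qed.

Theorem mainTheorem9 (S : Type) (mul : S -> S -> S)
  (HS : inverse_semigroup mul) (Hne : inhabited S) :
  (forall R : S -> S -> Prop,
     inverse_subsemigroup_prod mul R -> contains_diagonal R -> congruence mul R)
  <-> is_group mul.
Proof.
  destruct Hne as [s0]. split.
  - apply (main_fwd mul HS s0).
  - apply main_bwd. exact (proj1 HS).
Qed.
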